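(* Let $\mathbf{y}\in\mathbb{R}^n$ and $\mathbf{X}=(\mathbf{x}_1,\ldots,\mathbf{x}_p)\in\mathbb{R}^{n\times p}$ satisfy $\sum_{i=1}^n y_i=0$, and for every $j$, $\sum_{i=1}^n x_{ij}=0$ and $\frac1n\sum_{i=1}^n x_{ij}^2=1$. Let $\alpha\in(0,1]$ and for $\lambda>0$ let $$\widehat{\boldsymbol\beta}(\lambda,\alpha)=\operatorname*{argmin}_{\boldsymbol\beta\in\mathbb{R}^p}\ \frac{1}{2n}\|\mathbf{y}-\mathbf{X}\boldsymbol\beta\|^2+\alpha\lambda\|\boldsymbol\beta\|_1+\frac{(1-\alpha)\lambda}{2}\|\boldsymbol\beta\|^2 .$$ Let $\lambda_m=\max_j\left|\frac{\mathbf{x}_j^T\mathbf{y}}{\alpha n}\right|$ and $\mathbf{x}_*=\operatorname*{argmax}_{\mathbf{x}_j}|\mathbf{x}_j^T\mathbf{y}|$. Then for any $\lambda\in(0,\lambda_m]$ and any $\mathbf{x}_j\neq\mathbf{x}_*$, we have $\widehat{\beta}_j(\lambda,\alpha)=0$ if $$\left|(\lambda_m+\lambda)\mathbf{x}_j^T\mathbf{y}-(\lambda_m-\lambda)\frac{\mathrm{sign}(\mathbf{x}_*^T\mathbf{y})\,\alpha\lambda_m}{1+\lambda(1-\alpha)}\mathbf{x}_j^T\mathbf{x}_*\right|<2n\alpha\lambda\lambda_m-(\lambda_m-\lambda)\sqrt{n\|\mathbf{y}\|^2(1+\lambda(1-\alpha))-n^2\alpha^2\lambda_m^2}.$$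
   Context: $\|\cdot\|$ is the Euclidean norm and $\|\cdot\|_1$ the $\ell_1$ norm; $\widehat{\beta}_j(\lambda,\alpha)$ is the $j$th coordinate of the elastic net solution. *)

(* Defs.v *)
From HB Require Import structures.
From mathcomp Require Import all_boot all_order all_algebra.
From mathcomp Require Import reals.
Set Implicit Arguments. Unset Strict Implicit. Unset Printing Implicit Defensive.
Import Order.TTheory GRing.Theory Num.Theory.
Local Open Scope ring_scope.

Section EN.
Variables (R : realType) (n p : nat).

Definition xty (X : 'M[R]_(n, p)) (y : 'I_n -> R) (j : 'I_p) : R :=
  \sum_(i < n) X i j * y i.

Definition xtx (X : 'M[R]_(n, p)) (j k : 'I_p) : R :=
  \sum_(i < n) X i j * X i k.

Definition sqnorm (y : 'I_n -> R) : R := \sum_(i < n) y i ^+ 2.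

Definition enet_obj (X : 'M[R]_(n, p)) (y : 'I_n -> R) (lam alpha : R)
    (b : 'I_p -> R) : R :=
  (2 * n%:R)^-1 * \sum_(i < n) (y i - \sum_(l < p) X i l * b l) ^+ 2
  + alpha * lam * \sum_(l < p) `|b l|
  + (1 - alpha) * lam / 2 * \sum_(l < p) b l ^+ 2.

Definition enet_argmin (X : 'M[R]_(n, p)) (y : 'I_n -> R) (lam alpha : R)
    (b : 'I_p -> R) : Prop :=
  forall b' : 'I_p -> R, enet_obj X y lam alpha b <= enet_obj X y lam alpha b'.

Definition lambda_m (X : 'M[R]_(n, p)) (y : 'I_n -> R) (alpha : R) : R :=
  \big[Num.max/0]_(l < p) `|xty X y l / (alpha * n%:R)|.

End EN.

(* Main.v *)
Require Import Defs.
From HB Require Import structures.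
From mathcomp Require Import all_boot all_order all_algebra.
From mathcomp Require Import reals.
From mathcomp Require Import ring lra.
Import Order.TTheory GRing.Theory Num.Theory.
Local Open Scope ring_scope.

Section IP.
Variables (R : realType) (T : finType) (wt : T -> R).
Hypothesis wt_ge0 : forall k, 0 <= wt k.

Definition ip (u v : T -> R) : R := \sum_k wt k * (u k * v k).
Definition lc (a : R) (u : T -> R) (b : R) (v : T -> R) : T -> R :=
  fun k => a * u k + b * v k.

Lemma ip_sym u v : ip u v = ip v u.
Proof. by apply: eq_bigr => k _; rewrite mulrC [v k * _]mulrC mulrC. Qed.

Lemma ip_lc a u b v w : ip (lc a u b v) w = a * ip u w + b * ip v w.
Proof.
rewrite /ip !mulr_sumr -big_split /=; apply: eq_bigr => k _; rewrite /lc; ring.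
Qed.

Lemma ip_lcr a u b v w : ip w (lc a u b v) = a * ip w u + b * ip w v.
Proof. by rewrite ip_sym ip_lc ![ip _ w]ip_sym. Qed.

Lemma ip_ge0 u : 0 <= ip u u.
Proof. apply: sumr_ge0 => k _; apply: mulr_ge0 => //; rewrite -expr2; exact: sqr_ge0. Qed.

Lemma ip_ext u u' v : (forall k, u k = u' k) -> ip u v = ip u' v.
Proof. by move=> h; apply: eq_bigr => k _; rewrite h. Qed.

Lemma disc (A B C : R) : 0 <= C -> (forall t, 0 <= A + 2 * B * t + C * t ^+ 2) ->
  B ^+ 2 <= A * C.
Proof.
move=> hC h.
have [C0|Cpos] := eqVneq C 0.
  have [B0|Bn0] := eqVneq B 0; first by rewrite B0 C0; lra.
  have := h (- (A + 1) / (2 * B)); rewrite C0.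
  have -> : A + 2 * B * (- (A + 1) / (2 * B)) + 0 * (- (A + 1) / (2 * B)) ^+ 2 = -1.
    by field.
  lra.
have hC' : 0 < C by rewrite lt0r Cpos.
have := h (- B / C).
have -> : A + 2 * B * (- B / C) + C * (- B / C) ^+ 2 = (A * C - B ^+ 2) / C by field.
rewrite pmulr_lge0 ?invr_gt0 //; lra.
Qed.

Lemma CS u v : ip u v ^+ 2 <= ip u u * ip v v.
Proof.
apply: disc; first exact: ip_ge0.
move=> t; have := ip_ge0 (lc 1 u t v).
rewrite ip_lc !ip_lcr [ip v u]ip_sym.
have -> : 1 * (1 * ip u u + t * ip u v) + t * (1 * ip u v + t * ip v v)
  = ip u u + 2 * ip u v * t + ip v v * t ^+ 2 by ring.
done.
Qed.

Lemma geo (d v2 v1 xj : T -> R) (t : R) :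
  0 <= t -> ip d d <= ip v2 d -> ip v1 d <= 0 ->
  (ip xj d - ip xj (lc 1 v2 (-t) v1) / 2) ^+ 2
    <= ip xj xj * ip (lc 1 v2 (-t) v1) (lc 1 v2 (-t) v1) / 4.
Proof.
move=> ht hA hB.
move: (lc 1 v2 (-t) v1) (ip_lc 1 v2 (-t) v1 d) => w hwd'.
have hwd : ip d d <= ip w d.
  rewrite hwd' mul1r; have : 0 <= t * - ip v1 d by apply: mulr_ge0 => //; rewrite oppr_ge0. lra.
have hee : ip (lc 1 d (-(1/2)) w) (lc 1 d (-(1/2)) w) = ip d d - ip w d + ip w w / 4.
  rewrite ip_lc !ip_lcr [ip d w]ip_sym. by field.
have hxe : ip xj (lc 1 d (-(1/2)) w) = ip xj d - ip xj w / 2.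
  by rewrite ip_lcr; field.
have := CS xj (lc 1 d (-(1/2)) w); rewrite hee hxe => h.
have hxx := ip_ge0 xj.
have he : ip d d - ip w d + ip w w / 4 <= ip w w / 4 by lra.
apply: (le_trans h); have := ler_wpM2l hxx he; lra.
Qed.
End IP.
Arguments ip {R T} wt u v.
Arguments lc {R T} a u b v.
Arguments geo {R T wt}.
Arguments ip_ge0 {R T wt}.
Arguments CS {R T wt}.

Lemma quad0 (R : realType) (A K : R) : 0 <= K ->
  (forall s, 0 < s -> s <= 1 -> 0 <= s * (A + K * s)) -> 0 <= A.
Proof.
move=> hK h; rewrite leNgt; apply/negP => hA.
have hd : 0 < - A + K by lra.
have hs0 : 0 < - A / (- A + K) by apply: divr_gt0; lra.
have hs1 : - A / (- A + K) <= 1 by rewrite ler_pdivrMr //; lra.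
have := h _ hs0 hs1.
have -> : - A / (- A + K) * (A + K * (- A / (- A + K))) = - A * (- A / (- A + K)) * (- A / (- A + K)) * (-1).
  by field; rewrite gt_eqF.
have : 0 < - A * (- A / (- A + K)) * (- A / (- A + K)) by apply: mulr_gt0 => //; apply: mulr_gt0 => //; lra.
lra.
Qed.

Section Conc.
Variables (R : realType) (n p : nat) (X : 'M[R]_(n, p)) (y : 'I_n -> R).

Definition wt (m : R) (k : ('I_n + 'I_p)%type) : R :=
  match k with inl _ => 1 | inr _ => m end.
Definition xv (l : 'I_p) : ('I_n + 'I_p)%type -> R :=
  fun k => match k with inl i => X i l | inr k' => (k' == l)%:R end.
Definition Yv : ('I_n + 'I_p)%type -> R :=
  fun k => match k with inl i => y i | inr _ => 0 end.
Definition Xbv (b : 'I_p -> R) : ('I_n + 'I_p)%type -> R :=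
  fun k => match k with inl i => \sum_l X i l * b l | inr k' => b k' end.

Lemma sum_delta (F : 'I_p -> R) l : \sum_k (k == l)%:R * F k = F l.
Proof.
rewrite (bigD1 l) //= eqxx mul1r big1 ?addr0 // => k /negbTE ->; by rewrite mul0r.
Qed.

Lemma ip_split m u v : ip (wt m) u v =
  \sum_(i < n) u (inl i) * v (inl i) + m * \sum_k u (inr k) * v (inr k).
Proof.
rewrite /ip big_sumType /= mulr_sumr; congr (_ + _).
by apply: eq_bigr => i _; rewrite mul1r.
Qed.

Lemma ip_xv m l v : ip (wt m) (xv l) v = \sum_(i < n) X i l * v (inl i) + m * v (inr l).
Proof. by rewrite ip_split /= sum_delta. Qed.

Lemma ip_Xb m b v : ip (wt m) (Xbv b) v = \sum_l b l * ip (wt m) (xv l) v.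
Proof.
rewrite ip_split /=.
under [RHS]eq_bigr do rewrite ip_xv mulrDr mulr_sumr.
rewrite big_split /= exchange_big /=; congr (_ + _).
  apply: eq_bigr => i _; rewrite mulr_suml; apply: eq_bigr => l _; ring.
rewrite mulr_sumr; apply: eq_bigr => l _; ring.
Qed.

Lemma ip_Y m v : ip (wt m) Yv v = \sum_(i < n) y i * v (inl i).
Proof. by rewrite ip_split /= [X in m * X]big1 ?mulr0 ?addr0 // => k _; rewrite mul0r. Qed.

Lemma sum_pert (F : R -> R) (b : 'I_p -> R) l t :
  \sum_k F (b k + t * (k == l)%:R) = \sum_k F (b k) + (F (b l + t) - F (b l)).
Proof.
rewrite (bigD1 l) //= [in RHS](bigD1 l) //= eqxx mulr1.
rewrite (eq_bigr (fun k => F (b k))); first ring.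
by move=> k /negbTE ->; rewrite mulr0 addr0.
Qed.

Definition resid (b : 'I_p -> R) i := y i - \sum_l X i l * b l.
Definition gg (alpha lam : R) (b : 'I_p -> R) l :=
  n%:R^-1 * (\sum_(i < n) X i l * resid b i) - (1 - alpha) * lam * b l.

Lemma perturb alpha lam b l t : (n%:R : R) != 0 -> \sum_(i < n) X i l ^+ 2 = n%:R ->
  enet_obj X y lam alpha (fun k => b k + t * (k == l)%:R) =
  enet_obj X y lam alpha b - t * gg alpha lam b l
  + alpha * lam * (`|b l + t| - `|b l|) + (1 + (1 - alpha) * lam) / 2 * t ^+ 2.
Proof.
move=> hn hX.
rewrite /enet_obj (sum_pert (fun x => `|x|)) (sum_pert (fun x => x ^+ 2)).
have -> : \sum_(i < n) (y i - \sum_(l0 < p) X i l0 * (b l0 + t * (l0 == l)%:R)) ^+ 2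
  = \sum_(i < n) resid b i ^+ 2 + (- (2 * t)) * \sum_(i < n) X i l * resid b i + t ^+ 2 * \sum_(i < n) X i l ^+ 2.
  rewrite !mulr_sumr -big_split -big_split /=; apply: eq_bigr => i _.
  have -> : \sum_(l0 < p) X i l0 * (b l0 + t * (l0 == l)%:R) = \sum_(l0 < p) X i l0 * b l0 + t * X i l.
    rewrite -[t * X i l](sum_delta (fun k => t * X i k)) -big_split /=.
    by apply: eq_bigr => k _; ring.
  rewrite /resid; ring.
rewrite hX /gg; field. all: try exact: hn.
Qed.


Lemma kkt1 alpha lam b l : (n%:R : R) != 0 -> \sum_(i < n) X i l ^+ 2 = n%:R ->
  0 <= (1 - alpha) * lam -> enet_argmin X y lam alpha b ->
  alpha * lam * `|b l| <= b l * gg alpha lam b l.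
Proof.
move=> hn hX hm hb; rewrite -subr_ge0.
apply: (@quad0 _ _ ((1 + (1 - alpha) * lam) / 2 * b l ^+ 2)).
  apply: mulr_ge0; [apply: divr_ge0; lra | exact: sqr_ge0].
move=> s s0 s1.
have := hb (fun k => b k + (- (s * b l)) * (k == l)%:R).
rewrite perturb // -subr_ge0.
have -> : b l + - (s * b l) = (1 - s) * b l by ring.
rewrite normrM (ger0_norm (_ : 0 <= 1 - s)); last lra.
set G := gg _ _ _ _.
have -> : enet_obj X y lam alpha b - - (s * b l) * G +
   alpha * lam * ((1 - s) * `|b l| - `|b l|) +
   (1 + (1 - alpha) * lam) / 2 * (- (s * b l)) ^+ 2 - enet_obj X y lam alpha b
   = s * (b l * G - alpha * lam * `|b l| + (1 + (1 - alpha) * lam) / 2 * b l ^+ 2 * s).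
  by field.
done.
Qed.

Lemma kkt2 alpha lam b l : (n%:R : R) != 0 -> \sum_(i < n) X i l ^+ 2 = n%:R ->
  0 <= (1 - alpha) * lam -> 0 <= alpha * lam -> enet_argmin X y lam alpha b ->
  `|gg alpha lam b l| <= alpha * lam.
Proof.
move=> hn hX hm hal hb.
have key : forall sg : R, `|sg| = 1 -> 0 <= alpha * lam - sg * gg alpha lam b l.
  move=> sg hsg.
  apply: (@quad0 _ _ ((1 + (1 - alpha) * lam) / 2)); first by apply: divr_ge0; lra.
  move=> s s0 s1.
  have := hb (fun k => b k + (sg * s) * (k == l)%:R).
  rewrite perturb // -subr_ge0.
  have ht : `|b l + sg * s| - `|b l| <= s.
    have := ler_normD (b l) (sg * s); rewrite normrM hsg mul1r ger0_norm; last lra.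
    lra.
  set G := gg _ _ _ _.
  have hsg2 : sg ^+ 2 = 1 by rewrite -real_normK ?num_real // hsg expr1n.
  have -> : enet_obj X y lam alpha b - sg * s * G +
     alpha * lam * (`|b l + sg * s| - `|b l|) +
     (1 + (1 - alpha) * lam) / 2 * (sg * s) ^+ 2 - enet_obj X y lam alpha b
     = s * (- sg * G + (1 + (1 - alpha) * lam) / 2 * s)
       + alpha * lam * (`|b l + sg * s| - `|b l|).
    by rewrite exprMn hsg2; field.
  move=> h.
  have := ler_wpM2l hal ht.
  nra.
have k1 := key 1 (normr1 _); have k2 := key (-1) (ltac:(by rewrite normrN normr1)).
rewrite ler_norml; apply/andP; split; lra.
Qed.

End Conc.
Arguments xv {R n p} X l k.
Arguments Yv {R n p} y k.
Arguments Xbv {R n p} X b k.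
Arguments wt {R n p} m k.
Arguments gg {R n p} X y alpha lam b l.
Arguments resid {R n p} X y b i.

Ltac nz := rewrite ?andbT; repeat (apply/andP; split); assumption.

Theorem theorem4p1 (R : realType) (n p : nat) (y : 'I_n -> R)
    (X : 'M[R]_(n, p)) (alpha lam : R) (kstar j : 'I_p) :
  \sum_(i < n) y i = 0 ->
  (forall l : 'I_p, \sum_(i < n) X i l = 0) ->
  (forall l : 'I_p, n%:R^-1 * \sum_(i < n) X i l ^+ 2 = 1) ->
  0 < alpha <= 1 ->
  (* x_* = x_kstar is (an) argmax of |x_l^T y| *)
  (forall l : 'I_p, `|xty X y l| <= `|xty X y kstar|) ->
  0 < lam <= lambda_m X y alpha ->
  col j X != col kstar X ->
  let lm := lambda_m X y alpha in
  `| (lm + lam) * xty X y j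
     - (lm - lam) * (Num.sg (xty X y kstar) * alpha * lm / (1 + lam * (1 - alpha)))
       * xtx X j kstar |
  < 2 * n%:R * alpha * lam * lm
    - (lm - lam) * Num.sqrt (n%:R * sqnorm y * (1 + lam * (1 - alpha))
                             - n%:R ^+ 2 * alpha ^+ 2 * lm ^+ 2) ->
  forall b : 'I_p -> R, enet_argmin X y lam alpha b -> b j = 0.
Proof.
move=> hy hX hn /andP[a0 a1] hstar /andP[l0 lL] hcol lm Hineq b hb.
case: (eqVneq (b j) 0) => // hbj; exfalso.
have {}lL : lam <= lm := lL.
have hjk : j != kstar by apply/eqP => e; rewrite e eqxx in hcol.
have hn0 : (n%:R : R) != 0.
  apply/eqP => e; have := hn j; rewrite e invr0 mul0r => /eqP; by rewrite eq_sym oner_eq0.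
have hnpos : (0 : R) < n%:R by rewrite lt0r hn0 ler0n.
have hXs l : \sum_(i < n) X i l ^+ 2 = n%:R.
  have := hn l => /(congr1 (fun z => n%:R * z)); by rewrite mulrA mulfV // mul1r mulr1.
have ha0 : alpha != 0 by rewrite gt_eqF.
have hl0 : lam != 0 by rewrite gt_eqF.
have han : 0 < alpha * n%:R by apply: mulr_gt0.
have hnorm l : `|xty X y l / (alpha * n%:R)| = `|xty X y l| / (alpha * n%:R).
  by rewrite normrM normfV (gtr0_norm han).
have hLl l : `|xty X y l| / (alpha * n%:R) <= lm.
  rewrite -hnorm; exact: (le_bigmax (0 : R) (fun l => `|xty X y l / (alpha * n%:R)|) l).
have hLs : lm = `|xty X y kstar| / (alpha * n%:R).
  apply/le_anti/andP; split; last exact: hLl.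
  apply: bigmax_le; first by rewrite -hnorm normr_ge0.
  by move=> l _; rewrite hnorm ler_pM2r ?invr_gt0.
have hL0 : 0 < lm by apply: lt_le_trans lL.
have hxs : `|xty X y kstar| = lm * alpha * n%:R.
  by rewrite hLs; field; nz.
have hLn0 : lm != 0 by rewrite gt_eqF.
have hD : 0 < 1 + lam * (1 - alpha).
  have : 0 <= lam * (1 - alpha) by apply: mulr_ge0; lra.
  lra.
have hD0 : 1 + lam * (1 - alpha) != 0 by rewrite gt_eqF.
have hm0 : 0 <= n%:R * ((1 - alpha) * lam).
  apply: mulr_ge0; [exact: ltW | apply: mulr_ge0; lra].
have [m hm] : {m : R | m = n%:R * ((1 - alpha) * lam)} by exists (n%:R * ((1 - alpha) * lam)).
rewrite -hm in hm0.
have hxs0 : xty X y kstar != 0.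
  by apply/eqP => e; move: hxs; rewrite e normr0 => /eqP; rewrite eq_sym !mulf_eq0 (negbTE hLn0) (negbTE ha0) (negbTE hn0).
set s := Num.sg (xty X y kstar).
have hs2 : s ^+ 2 = 1.
  by rewrite /s sqr_sg hxs0.
have hsx : s * xty X y kstar = lm * alpha * n%:R by rewrite /s -normrEsg.
have wt0' : forall k, 0 <= wt (n:=n) (p:=p) m k by case=> //.
set W := wt (n:=n) (p:=p) m.
have [kap hk] : {k : R | k = (n%:R * alpha * lam)^-1} by exists (n%:R * alpha * lam)^-1.
have [kap0 hk0] : {k : R | k = (n%:R * alpha * lm)^-1} by exists (n%:R * alpha * lm)^-1.
have hkap : 0 <= kap by rewrite hk invr_ge0; apply: mulr_ge0; [apply: mulr_ge0|]; lra.
set c := kap - kap0.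
have hc : c = (lm - lam) / (n%:R * alpha * lam * lm) by rewrite /c hk hk0; field; nz.
have hc0 : 0 <= c.
  rewrite hc; apply: divr_ge0; first lra.
  apply: mulr_ge0; [apply: mulr_ge0; [apply: mulr_ge0|]|]; lra.
set D := 1 + lam * (1 - alpha).
set t := c * alpha * lm / D.
have ht : 0 <= t by apply: divr_ge0; [apply: mulr_ge0; [apply: mulr_ge0|]|]; [exact: hc0 | exact: ltW | exact: ltW | exact: ltW].
set d := fun k => kap * (Yv y k - Xbv X b k) - kap0 * Yv y k.
pose v2 := lc c (Yv (p:=p) y) 0 (Yv (p:=p) y).
pose v1 := lc s (xv X kstar) 0 (Yv y).
have ipxY l : ip W (xv X l) (Yv y) = xty X y l by rewrite ip_xv /= mulr0 addr0.
have ipxx l l' : ip W (xv X l) (xv X l') = xtx X l l' + m * (l == l')%:R by rewrite ip_xv.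
have ipYY : ip W (Yv y) (Yv y) = sqnorm y.
  by rewrite ip_Y; apply: eq_bigr => i _; rewrite expr2.
have hxx l : xtx X l l = n%:R.
  by rewrite /xtx -(hXs l); apply: eq_bigr => i _; rewrite expr2.
have ipxd l : ip W (xv X l) d = gg X y alpha lam b l / (alpha * lam) - xty X y l * kap0.
  rewrite ip_xv /d /=.
  have -> : \sum_(i < n) X i l * (kap * (y i - Xbv X b (inl i)) - kap0 * y i)
     = kap * \sum_(i < n) X i l * resid X y b i - kap0 * xty X y l.
    rewrite /xty !mulr_sumr -sumrB; apply: eq_bigr => i _; rewrite /resid /=; ring.
  by rewrite /gg hm hk; field; nz.
have hal : 0 < alpha * lam by apply: mulr_gt0.
have hal0 : alpha * lam != 0 by rewrite gt_eqF.
have hmv : 0 <= (1 - alpha) * lam by apply: mulr_ge0; lra.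
have hk0n l : `|xty X y l * kap0| <= 1.
  have hpos : 0 < n%:R * alpha * lm by apply: mulr_gt0; [apply: mulr_gt0|].
  rewrite normrM hk0 normfV (gtr0_norm hpos).
  have := hLl l; rewrite ler_pdivrMr // => h.
  rewrite ler_pdivrMr // mul1r; lra.
have hA : ip W d d <= ip W v2 d.
  rewrite -subr_ge0.
  have -> : ip W v2 d - ip W d d = ip W (lc 1 v2 (-1) d) d by rewrite ip_lc; ring.
  rewrite (@ip_ext _ _ _ _ (lc kap (Xbv X b) 0 d)); last first.
    by move=> k; rewrite /v2 /d /c /lc /=; ring.
  rewrite ip_lc ip_Xb mul0r addr0; apply: mulr_ge0 => //.
  apply: sumr_ge0 => l _; rewrite ipxd mulrBr subr_ge0.
  have k1 := @kkt1 R n p X y alpha lam b l hn0 (hXs l) hmv hb.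
  apply: (@le_trans _ _ `|b l|).
    apply: (le_trans (ler_norm _)); rewrite normrM; apply: ler_piMr => //.
  by rewrite mulrA ler_pdivlMr // mulrC.
have hB : ip W v1 d <= 0.
  rewrite /v1 ip_lc mul0r addr0 ipxd mulrBr.
  have -> : s * (xty X y kstar * kap0) = 1 by rewrite mulrA hsx hk0; field; nz.
  rewrite subr_le0; apply: (le_trans (ler_norm _)).
  rewrite normrM /s normr_sg hxs0 /= mul1r normrM normfV (gtr0_norm hal).
  rewrite ler_pdivrMr // mul1r; exact: (@kkt2 R n p X y alpha lam b kstar hn0 (hXs kstar) hmv (ltW hal) hb).
have hg := geo wt0' d v2 v1 (xv X j) t ht hA hB.
have hkj : (j == kstar) = false by apply/negbTE.
have hjj : (j == j) = true by rewrite eqxx.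
have hss : (kstar == kstar) = true by rewrite eqxx.
have ipYx l : ip W (Yv y) (xv X l) = xty X y l by rewrite ip_sym.
have eWx : ip W (xv X j) (lc 1 v2 (- t) v1) = c * xty X y j - t * s * xtx X j kstar.
  rewrite /v2 /v1 !ip_lcr !ipxY ipxx hkj /=; ring.
have eWW : ip W (lc 1 v2 (- t) v1) (lc 1 v2 (- t) v1) =
    c ^+ 2 * sqnorm y - 2 * t * c * (s * xty X y kstar) + t ^+ 2 * s ^+ 2 * (n%:R + m).
  rewrite /v2 /v1 !ip_lc !ip_lcr !ipYY !ipYx !ipxY ipxx hss hxx /=; ring.
have eXX : ip W (xv X j) (xv X j) = n%:R + m by rewrite ipxx hjj hxx /= mulr1.
rewrite eWx eWW eXX hsx hs2 in hg.
set S := n%:R * sqnorm y * (1 + lam * (1 - alpha)) - n%:R ^+ 2 * alpha ^+ 2 * lm ^+ 2 in Hineq.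
set P := ip W (xv X j) d in hg.
set Wx := c * xty X y j - t * s * xtx X j kstar in hg.
have eQ : (n%:R + m) * (c ^+ 2 * sqnorm y - 2 * t * c * (lm * alpha * n%:R) + t ^+ 2 * 1 * (n%:R + m)) / 4
   = c ^+ 2 * S / 4.
  by rewrite /S /t /D hm; field; nz.
rewrite eQ in hg.
have hsq0 := sqrtr_ge0 S.
have hPW : `|P - Wx / 2| <= c * Num.sqrt S / 2.
  have hz2 : `|P - Wx / 2| ^+ 2 = (P - Wx / 2) ^+ 2 by rewrite real_normK ?num_real.
  have hz0 := normr_ge0 (P - Wx / 2).
  have hB0 : 0 <= c * Num.sqrt S / 2 by apply: divr_ge0 => //; apply: mulr_ge0.
  have [hS|hS] := leP 0 S.
    have hB2 : (c * Num.sqrt S / 2) ^+ 2 = c ^+ 2 * S / 4.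
      by rewrite !exprMn sqr_sqrtr //; field.
    rewrite -hB2 -hz2 in hg; nra.
  have : c ^+ 2 * S / 4 <= 0.
    apply: mulr_le0_ge0; last by rewrite invr_ge0; lra.
    apply: mulr_ge0_le0; [exact: sqr_ge0 | exact: ltW].
  move=> h; rewrite -hz2 in hg; nra.
have hG : gg X y alpha lam b j / (alpha * lam) = (xty X y j * kap0 + Wx / 2) + (P - Wx / 2).
  by rewrite /P ipxd; ring.
have hK : 0 < 2 * n%:R * alpha * lam * lm.
  by apply: mulr_gt0 => //; apply: mulr_gt0 => //; apply: mulr_gt0 => //; apply: mulr_gt0.
have hE : xty X y j * kap0 + Wx / 2 =
   ((lm + lam) * xty X y j
     - (lm - lam) * (Num.sg (xty X y kstar) * alpha * lm / (1 + lam * (1 - alpha)))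
       * xtx X j kstar) / (2 * n%:R * alpha * lam * lm).
  by rewrite /Wx /t /s /D hc hk0; field; nz.
have hcs : c * Num.sqrt S / 2 = (lm - lam) * Num.sqrt S / (2 * n%:R * alpha * lam * lm).
  by rewrite hc; field; nz.
have hlt : `|gg X y alpha lam b j / (alpha * lam)| < 1.
  rewrite hG; apply: (le_lt_trans (ler_normD _ _)).
  rewrite hE normrM normfV (gtr0_norm hK).
  apply: (@le_lt_trans _ _ (`|(lm + lam) * xty X y j
     - (lm - lam) * (Num.sg (xty X y kstar) * alpha * lm / (1 + lam * (1 - alpha)))
       * xtx X j kstar| / (2 * n%:R * alpha * lam * lm) + (lm - lam) * Num.sqrt S / (2 * n%:R * alpha * lam * lm))).
    by rewrite lerD2l -hcs.
  rewrite -mulrDl ltr_pdivrMr // mul1r.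
  rewrite /S in Hineq |- *; lra.
have k1 := @kkt1 R n p X y alpha lam b j hn0 (hXs j) hmv hb.
have hbj0 : 0 < `|b j| by rewrite normr_gt0.
have : alpha * lam * `|b j| <= `|b j| * `|gg X y alpha lam b j|.
  apply: (le_trans k1); rewrite -normrM; exact: ler_norm.
rewrite mulrC ler_pM2l // => h1.
move: hlt; rewrite normrM normfV (gtr0_norm hal) ltr_pdivrMr // mul1r.
by rewrite ltNge h1.
Qed.
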